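(* Let $p\in(0,1/2)$, $\beta<0$, $\alpha=\frac{2}{2-p}$, $\gamma_\beta=\big[\frac{3}{|\beta|(p+1)}\big]^{1/3}$, $q\in(\frac{p+1}{3},1)$ and $\delta>0$. Let $\zeta\in C([0,\delta])$ satisfy: - $\zeta(0)=0$; - $|\zeta(\varphi)-\gamma_\beta\varphi^{(p+1)/3}|\le\varphi^q$ on $[0,\delta]$; - on $(0,\delta]$, $$\zeta'=\frac{\alpha^2\zeta+\varphi^p\zeta^{-1}}{\alpha(\alpha-1)\varphi-\beta\zeta}\qquad(\ast).$$ Then $\zeta$ extends to a solution of $(\ast)$ on $(0,\infty)$ that is positive and monotone increasing.
   Context: Such a $\zeta$ exists (as a fixed point of the map defined by $\zeta'=(\alpha^2\xi+\varphi^p\xi^{-1})/(\alpha(\alpha-1)\varphi-\beta\xi)$, $\zeta(0)=0$) when $q$ is close to $1$ and $\delta$ is small. *)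

(* Defs.v *)
From Stdlib Require Import Reals.
From Coquelicot Require Import Coquelicot.
Open Scope R_scope.

(* Real power x^y for x >= 0, y > 0, with the convention 0^y = 0
   (Stdlib's Rpower gives Rpower 0 y = 1, which is not the intended value). *)
Definition rpow (x y : R) : R := if Rlt_dec 0 x then Rpower x y else 0.

Definition alpha (p : R) : R := 2 / (2 - p).

Definition gamma_beta (p beta : R) : R := rpow (3 / (Rabs beta * (p + 1))) (1/3).

Definition ode_rhs (p beta phi z : R) : R :=
  (alpha p ^ 2 * z + rpow phi p / z) /
  (alpha p * (alpha p - 1) * phi - beta * z).

Definition ode_defined (p beta phi z : R) : Prop :=
  z <> 0 /\ alpha p * (alpha p - 1) * phi - beta * z <> 0.

(* Main.v *)
Require Import Defs.
From Stdlib Require Import Reals.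
From Coquelicot Require Import Coquelicot.
From Stdlib Require Import Lra Lia.
Open Scope R_scope.

Lemma cont_mul (f g : R -> R) x: continuous f x -> continuous g x -> continuous (fun y => f y * g y) x.
Proof. intros; now apply (continuous_mult f g). Qed.
Lemma cont_plus (f g : R -> R) x: continuous f x -> continuous g x -> continuous (fun y => f y + g y) x.
Proof. intros; now apply (continuous_plus f g). Qed.
Lemma cont_minus (f g : R -> R) x: continuous f x -> continuous g x -> continuous (fun y => f y - g y) x.
Proof. intros; now apply (continuous_minus f g). Qed.
Lemma cont_const (a x : R) : continuous (fun _ : R => a) x.
Proof. apply continuous_const. Qed.
Lemma cont_id (x : R) : continuous (fun y : R => y) x.
Proof. apply continuous_id. Qed.
Lemma cont_div (f g : R -> R) x: continuous f x -> continuous g x -> g x <> 0 -> continuous (fun y => f y / g y) x.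
Proof. intros. apply cont_mul; auto. now apply continuous_Rinv_comp. Qed.

Lemma cont_eps (f : R -> R) x :
  (forall eps, 0 < eps -> exists eta, 0 < eta /\ forall y, Rabs (y - x) < eta -> Rabs (f y - f x) < eps) ->
  continuous f x.
Proof.
  intros H. apply filterlim_locally. intros eps.
  destruct (H eps (cond_pos eps)) as [eta [Heta H2]].
  exists (mkposreal eta Heta). intros y Hy. apply H2. exact Hy.
Qed.

Definition RI (f : R -> R) (a b : R) : R := RInt f a b.

Lemma RInt_minus_R (f g : R -> R) a b : ex_RInt f a b -> ex_RInt g a b ->
  RI (fun x => f x - g x) a b = RI f a b - RI g a b.
Proof. intros. apply (RInt_minus f g); auto. Qed.

Lemma RInt_Chasles_R (f : R -> R) a b c : ex_RInt f a b -> ex_RInt f b c ->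
  RI f a b + RI f b c = RI f a c.
Proof. intros. apply (RInt_Chasles f); auto. Qed.

Lemma RInt_swap_R (f : R -> R) a b : ex_RInt f a b -> RI f b a = - RI f a b.
Proof. intros. unfold RI. rewrite <- (opp_RInt_swap f a b); auto. Qed.

Lemma RInt_point_R (f : R -> R) a : RI f a a = 0.
Proof. exact (RInt_point a f). Qed.

Lemma Rmax_lip x y c : Rabs (Rmax x c - Rmax y c) <= Rabs (x - y).
Proof. unfold Rmax; destruct (Rle_dec x c), (Rle_dec y c); split_Rabs; lra. Qed.

Lemma cont_Rmax (f : R -> R) c x : continuous f x -> continuous (fun y => Rmax (f y) c) x.
Proof.
  intros Hf. apply (continuous_comp f (fun z => Rmax z c)); auto.
  apply cont_eps. intros eps He. exists eps; split; auto. intros y Hy.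
  eapply Rle_lt_trans; [apply Rmax_lip|]. exact Hy.
Qed.

Lemma exRInt (f : R -> R) a b : (forall z, continuous f z) -> ex_RInt f a b.
Proof. intros H. apply (ex_RInt_continuous (V:=R_CompleteNormedModule)). intros; apply H. Qed.

Lemma Rmax_mono x X d : x <= X -> Rmax x d <= Rmax X d.
Proof. intros; unfold Rmax; destruct (Rle_dec x d), (Rle_dec X d); lra. Qed.

Lemma cont_der (f : R -> R) x : ex_derive f x -> continuous f x.
Proof. intros H. apply (ex_derive_continuous (K:=R_AbsRing) (V:=R_NormedModule)). exact H. Qed.

Lemma der_const (c x : R) : is_derive (fun _ : R => c) x 0.
Proof. apply (is_derive_const (K:=R_AbsRing) (V:=R_NormedModule)). Qed.

Lemma der_plus (f g : R -> R) x a b : is_derive f x a -> is_derive g x b ->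
  is_derive (fun y => f y + g y) x (a + b).
Proof. intros. apply (is_derive_plus f g); auto. Qed.


Lemma half_pow_pos n : 0 < (/2)^n.
Proof. apply pow_lt; lra. Qed.

Lemma half_pow_le n m : (n <= m)%nat -> (/2)^m <= (/2)^n.
Proof.
  induction 1; [lra|]. simpl. pose proof (half_pow_pos m). lra.
Qed.

Lemma geom_zero a M : (forall n, Rabs a <= M * (/2)^n) -> a = 0.
Proof.
  intros H. destruct (Req_dec a 0) as [|Ha]; auto. exfalso.
  assert (Hp : 0 < Rabs a) by (apply Rabs_pos_lt; auto).
  assert (HM : 0 <= M) by (specialize (H O); simpl in H; lra).
  destruct (pow_lt_1_zero (/2)) with (y := Rabs a / (M+1)) as [N HN].
  { rewrite Rabs_right; lra. }
  { apply Rdiv_lt_0_compat; lra. }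
  specialize (HN N (le_n N)). rewrite Rabs_right in HN by (left; apply half_pow_pos).
  specialize (H N).
  assert (M * (/2)^N <= M * (Rabs a / (M+1))) by (apply Rmult_le_compat_l; lra).
  assert (M * (Rabs a / (M+1)) < Rabs a).
  { apply Rmult_lt_reg_r with (M+1); [lra|].
    replace (M * (Rabs a / (M+1)) * (M+1)) with (M * Rabs a) by (field; lra). nra. }
  lra.
Qed.

Lemma lim_bound (u : nat -> R) l a M n : Un_cv u l ->
  (forall m, (n <= m)%nat -> Rabs (u m - a) <= M) -> Rabs (l - a) <= M.
Proof.
  intros Hu H. destruct (Rle_dec (Rabs (l - a)) M) as [|Hn]; auto.
  apply Rnot_le_lt in Hn.
  destruct (Hu (Rabs (l - a) - M)) as [N HN]; [lra|].
  specialize (HN (Nat.max N n) ltac:(lia)). specialize (H (Nat.max N n) ltac:(lia)).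
  unfold R_dist in HN.
  assert (Rabs (l - a) <= Rabs (u (Nat.max N n) - l) + Rabs (u (Nat.max N n) - a)).
  { replace (l - a) with (-(u (Nat.max N n) - l) + (u (Nat.max N n) - a)) by ring.
    eapply Rle_trans; [apply Rabs_triang|]. rewrite Rabs_Ropp. lra. }
  lra.
Qed.

Lemma lip_cont (f Q : R -> R) : (forall X, 0 <= Q X) ->
  (forall X x y, x <= X -> y <= X -> Rabs (f x - f y) <= Q X * Rabs (x - y)) ->
  forall x, continuous f x.
Proof.
  intros HQ H x. apply cont_eps. intros eps He.
  set (q := Q (x+1)). assert (0 <= q) by apply HQ.
  exists (Rmin 1 (eps / (q+1))). split.
  { apply Rmin_pos; [lra| apply Rdiv_lt_0_compat; lra]. }
  intros y Hy. assert (Hy1 : Rabs (y - x) < 1) by (eapply Rlt_le_trans; [exact Hy| apply Rmin_l]).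
  assert (Hy2 : Rabs (y - x) < eps/(q+1)) by (eapply Rlt_le_trans; [exact Hy| apply Rmin_r]).
  assert (Hyx : y <= x + 1) by (apply Rabs_lt_between' in Hy1; lra).
  eapply Rle_lt_trans; [apply (H (x+1)); lra|].
  fold q.
  assert (q * Rabs (y - x) <= q * (eps/(q+1))) by (apply Rmult_le_compat_l; lra).
  assert (q * (eps/(q+1)) < eps).
  { apply Rmult_lt_reg_r with (q+1); [lra|].
    replace (q * (eps / (q+1)) * (q+1)) with (q * eps) by (field; lra). nra. }
  lra.
Qed.

Lemma RInt_bound (g : R -> R) (Hg : forall t, continuous g t) u v M :
  (forall t, Rmin u v <= t <= Rmax u v -> Rabs (g t) <= M) ->
  Rabs (RI g u v) <= M * Rabs (v - u).
Proof.
  intros H. destruct (Rle_dec u v).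
  - rewrite Rmin_left, Rmax_right in H by lra.
    rewrite (Rabs_right (v-u)) by lra. rewrite Rmult_comm.
    apply abs_RInt_le_const; auto. apply exRInt; auto.
  - rewrite Rmin_right, Rmax_left in H by lra.
    rewrite RInt_swap_R by (apply exRInt; auto).
    rewrite Rabs_Ropp, (Rabs_left (v-u)) by lra. unfold RI. replace (- (v - u)) with (u - v) by ring.
    rewrite Rmult_comm. apply abs_RInt_le_const; auto. lra.
    apply exRInt; auto.
Qed.


Section Picard.
Variables (d c L B0 B1 : R) (G : R -> R -> R).
Hypotheses (Hd : 0 < d) (HL : 0 <= L) (HB0 : 0 <= B0) (HB1 : 0 <= B1)
 (Hcont : forall Y : R -> R, (forall x, continuous Y x) -> forall t, continuous (fun t => G t (Y t)) t)
 (Hlip : forall t z1 z2, Rabs (G t z1 - G t z2) <= L * Rabs (z1 - z2))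
 (Hbnd : forall t z, Rabs (G t z) <= B0 + B1 * Rmax t d)
 (Hpos : forall t z, 0 <= G t z).

Fixpoint Y (n : nat) (x : R) : R :=
  match n with O => c | S k => c + RI (fun t => G t (Y k t)) d (Rmax x d) end.

Definition P X := B0 + B1 * Rmax X d.

Lemma P_pos X : 0 <= P X.
Proof. unfold P. assert (0 <= Rmax X d) by (eapply Rle_trans; [left; exact Hd| apply Rmax_r]). nra. Qed.

Lemma Y_lip n : forall X x y, x <= X -> y <= X -> Rabs (Y n x - Y n y) <= P X * Rabs (x - y).
Proof.
  induction n as [|n IH]; intros X x y Hx Hy.
  - simpl. rewrite Rminus_diag, Rabs_R0. pose proof (P_pos X). pose proof (Rabs_pos (x-y)). nra.
  - assert (Hc : forall x, continuous (Y n) x) by (apply (lip_cont _ P); [apply P_pos| exact IH]).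
    assert (Hg := Hcont _ Hc).
    simpl. replace (c + RI (fun t => G t (Y n t)) d (Rmax x d) - (c + RI (fun t => G t (Y n t)) d (Rmax y d)))
      with (RI (fun t => G t (Y n t)) (Rmax y d) (Rmax x d)).
    2:{ rewrite <- (RInt_Chasles_R _ d (Rmax y d) (Rmax x d)) by (apply exRInt; auto). ring. }
    eapply Rle_trans. apply (RInt_bound _ Hg _ _ (P X)).
    + intros t Ht. eapply Rle_trans; [apply Hbnd|]. unfold P.
      apply Rplus_le_compat_l. apply Rmult_le_compat_l; auto.
      assert (Hd1 : d <= Rmax y d) by apply Rmax_r. assert (Hd2 : d <= Rmax x d) by apply Rmax_r.
      assert (t <= Rmax X d).
      { destruct Ht as [_ Ht]. eapply Rle_trans; [exact Ht|].
        apply Rmax_lub; apply Rmax_mono; auto. }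
      apply Rmax_lub; auto. apply Rmax_r.
    + apply Rmult_le_compat_l; [apply P_pos|]. rewrite <- Rabs_Ropp.
      replace (- (Rmax x d - Rmax y d)) with (Rmax y d - Rmax x d) by ring.
      rewrite <- (Rabs_Ropp (x - y)). replace (- (x - y)) with (y - x) by ring.
      apply Rmax_lip.
Qed.

Lemma Y_cont n x : continuous (Y n) x.
Proof. apply (lip_cont _ P); [apply P_pos| apply Y_lip]. Qed.

Lemma g_cont n t : continuous (fun t => G t (Y n t)) t.
Proof. apply Hcont. intro; apply Y_cont. Qed.

Lemma Y_left n x : x <= d -> Y n x = c.
Proof. intros H. destruct n; simpl; auto. rewrite Rmax_right by lra. rewrite RInt_point_R. ring. Qed.

Definition K := 2 * L + 1.
Definition E x := exp (K * (x - d)).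
Definition A := (B0 + B1 * d + B1) / K.

Lemma K_pos : 0 < K. Proof. unfold K; lra. Qed.

Lemma E_pos x : 0 < E x. Proof. apply exp_pos. Qed.

Lemma E_le x y : x <= y -> E x <= E y.
Proof. intros. unfold E. destruct (Req_dec x y). subst; lra. left. apply exp_increasing.
  pose proof K_pos. nra. Qed.

Lemma A_pos : 0 <= A.
Proof. unfold A. pose proof K_pos. apply Rmult_le_pos; [nra| left; apply Rinv_0_lt_compat; lra]. Qed.

Lemma int_exp_bound (g : R -> R) (Hg : forall t, continuous g t) D x : d <= x -> 0 <= D ->
  (forall t, d <= t <= x -> Rabs (g t) <= K * D * E t) -> Rabs (RI g d x) <= D * E x.
Proof.
  intros Hx HD H.
  assert (Hex : forall t, continuous (fun t => K * D * E t) t).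
  { intro t. apply cont_der. unfold E. auto_derive. auto. }
  unfold RI. eapply Rle_trans. apply abs_RInt_le; auto. apply exRInt; auto.
  eapply Rle_trans. apply RInt_le with (g := fun t => K * D * E t); auto.
  apply exRInt. intro z. apply continuous_Rabs_comp; auto. apply exRInt; auto.
  intros t Ht. apply H; lra.
  assert (Hi : is_RInt (fun t => K * D * E t) d x (minus (D * E x) (D * E d))).
  { apply (is_RInt_derive (fun t => D * E t)).
    - intros t _. unfold E. auto_derive; auto. unfold Rminus. ring.
    - intros t _. apply Hex. }
  rewrite (is_RInt_unique _ _ _ _ Hi). unfold minus, plus, opp; simpl.
  unfold E at 2. rewrite Rminus_diag, Rmult_0_r, exp_0. lra.
Qed.

Lemma exp_lin x : 0 <= x -> 1 + K * (x - d) <= E x.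
Proof. intros. apply exp_ineq1_le. Qed.

Lemma G_bound t z : d <= t -> Rabs (G t z) <= K * A * E t.
Proof.
  intros Ht. eapply Rle_trans; [apply Hbnd|]. rewrite Rmax_left by lra.
  assert (HKA : K * A = B0 + B1 * d + B1) by (unfold A; field; pose proof K_pos; lra).
  rewrite HKA. pose proof (exp_lin t ltac:(lra)). pose proof K_pos.
  assert (1 <= K) by (unfold K; lra).
  assert (B1 * (t - d) <= B1 * K * (t - d)) by (apply Rmult_le_compat_r; nra).
  assert (0 <= B0 + B1 * d + B1) by nra.
  assert ((B0 + B1 * d + B1) * (1 + K * (t - d)) <= (B0 + B1 * d + B1) * E t)
    by (apply Rmult_le_compat_l; lra).
  assert (0 <= (B0 + B1 * d) * (K * (t - d))) by (apply Rmult_le_pos; nra).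
  nra.
Qed.

Lemma Y_diff n : forall x, d <= x -> Rabs (Y (S n) x - Y n x) <= A * (/2)^n * E x.
Proof.
  induction n as [|n IH]; intros x Hx.
  - simpl. rewrite Rmax_left by lra.
    replace (c + RI (fun t => G t c) d x - c) with (RI (fun t => G t c) d x) by ring.
    rewrite Rmult_1_r. apply int_exp_bound; auto.
    + intro t. apply (g_cont O).
    + apply A_pos.
    + intros t Ht. apply G_bound; lra.
  - change (Y (S (S n)) x) with (c + RI (fun t => G t (Y (S n) t)) d (Rmax x d)).
    change (Y (S n) x) with (c + RI (fun t => G t (Y n t)) d (Rmax x d)).
    rewrite Rmax_left by lra.
    replace (c + RI (fun t => G t (Y (S n) t)) d x - (c + RI (fun t => G t (Y n t)) d x))
      with (RI (fun t => G t (Y (S n) t) - G t (Y n t)) d x)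
      by (rewrite RInt_minus_R by (apply exRInt; apply g_cont); ring).
    replace (A * (/2)^(S n) * E x) with ((A * (/2)^(S n)) * E x) by ring.
    apply int_exp_bound; auto.
    + intro t. apply cont_minus; apply g_cont.
    + pose proof A_pos; pose proof (half_pow_pos (S n)); nra.
    + intros t Ht. eapply Rle_trans; [apply Hlip|].
      specialize (IH t ltac:(lra)).
      assert (L * Rabs (Y (S n) t - Y n t) <= L * (A * (/2)^n * E t)) by (apply Rmult_le_compat_l; auto).
      eapply Rle_trans; [exact H|]. simpl.
      pose proof A_pos; pose proof (half_pow_pos n); pose proof (E_pos t).
      assert (0 <= A * (/2)^n * E t) by (apply Rmult_le_pos; [apply Rmult_le_pos|]; lra).
      unfold K. nra.
Qed.

Lemma Y_cauchy n m x : d <= x -> Rabs (Y (n + m) x - Y n x) <= 2 * A * ((/2)^n - (/2)^(n+m)) * E x.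
Proof.
  intros Hx. induction m as [|m IH].
  - rewrite Nat.add_0_r, Rminus_diag, Rabs_R0. lra.
  - rewrite Nat.add_succ_r.
    replace (Y (S (n + m)) x - Y n x) with ((Y (S (n+m)) x - Y (n+m) x) + (Y (n+m) x - Y n x)) by ring.
    eapply Rle_trans; [apply Rabs_triang|].
    pose proof (Y_diff (n+m) x Hx). simpl pow. lra.
Qed.

Lemma Y_cauchy2 n m x : (n <= m)%nat -> d <= x -> Rabs (Y m x - Y n x) <= 2 * A * (/2)^n * E x.
Proof.
  intros Hnm Hx. replace m with (n + (m - n))%nat by lia.
  eapply Rle_trans; [apply Y_cauchy; auto|].
  pose proof A_pos; pose proof (half_pow_pos (n + (m-n))); pose proof (E_pos x).
  apply Rmult_le_compat_r; [lra|]. nra.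
Qed.

Definition Z x := real (Lim_seq (fun n => Y n x)).

Lemma Y_cvg x : Un_cv (fun n => Y n x) (Z x).
Proof.
  apply is_lim_seq_Reals. unfold Z. apply Lim_seq_correct'.
  apply ex_lim_seq_cauchy_corr. intros eps.
  destruct (Rle_dec x d) as [Hxd|Hxd].
  - exists O. intros n m _ _. rewrite !Y_left by auto. rewrite Rminus_diag, Rabs_R0. apply cond_pos.
  - apply Rnot_le_lt in Hxd.
    pose proof A_pos; pose proof (E_pos x).
    destruct (pow_lt_1_zero (/2)) with (y := eps / (2 * A * E x + 1)) as [N HN].
    { rewrite Rabs_right; lra. }
    { apply Rdiv_lt_0_compat; [apply cond_pos| nra]. }
    exists N. intros n m Hn Hm.
    assert (Hb : forall n m, (N <= n)%nat -> (n <= m)%nat -> Rabs (Y m x - Y n x) < eps).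
    { intros n0 m0 H1 H2. eapply Rle_lt_trans; [apply Y_cauchy2; auto; lra|].
      specialize (HN n0 H1). rewrite Rabs_right in HN by (left; apply half_pow_pos).
      pose proof (cond_pos eps).
      assert (2 * A * (/2)^n0 * E x = (2 * A * E x) * (/2)^n0) by ring.
      assert ((2 * A * E x) * (/2)^n0 <= (2 * A * E x) * (eps / (2 * A * E x + 1))).
      { apply Rmult_le_compat_l; [nra| lra]. }
      assert ((2 * A * E x) * (eps / (2 * A * E x + 1)) < eps).
      { apply Rmult_lt_reg_r with (2 * A * E x + 1); [nra|].
        replace ((2 * A * E x) * (eps / (2 * A * E x + 1)) * (2 * A * E x + 1)) with ((2 * A * E x) * eps)
          by (field; nra). nra. }
      lra. }
    destruct (Nat.le_ge_cases n m).
    + rewrite <- Rabs_Ropp. replace (- (Y n x - Y m x)) with (Y m x - Y n x) by ring. apply Hb; auto.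
    + apply Hb; auto.
Qed.

Lemma Z_bound n x : d <= x -> Rabs (Z x - Y n x) <= 2 * A * (/2)^n * E x.
Proof.
  intros Hx. apply (lim_bound _ _ _ _ n (Y_cvg x)). intros m Hm. apply Y_cauchy2; auto.
Qed.

Lemma Z_lip X x y : x <= X -> y <= X -> Rabs (Z x - Z y) <= P X * Rabs (x - y).
Proof.
  intros Hx Hy. replace (Z x - Z y) with (Z x - Z y - 0) by ring.
  apply (lim_bound (fun n => Y n x - Y n y) _ _ _ O).
  - apply CV_minus; apply Y_cvg.
  - intros m _. rewrite Rminus_0_r. apply Y_lip; auto.
Qed.

Lemma Z_cont x : continuous Z x.
Proof. apply (lip_cont _ P); [apply P_pos| exact Z_lip]. Qed.

Lemma Z_left x : x <= d -> Z x = c.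
Proof.
  intros Hx. assert (H : Rabs (Z x - c) <= 0).
  { apply (lim_bound _ _ _ _ O (Y_cvg x)). intros m _. rewrite Y_left, Rminus_diag, Rabs_R0 by auto. lra. }
  pose proof (Rabs_pos (Z x - c)). assert (Rabs (Z x - c) = 0) by lra.
  apply Rabs_eq_0 in H1. lra.
Qed.

Definition gZ t := G t (Z t).

Lemma gZ_cont t : continuous gZ t.
Proof. apply Hcont. apply Z_cont. Qed.

Lemma Z_eq x : d <= x -> Z x = c + RI gZ d x.
Proof.
  intros Hx. enough (Z x - c - RI gZ d x = 0) by lra.
  apply (geom_zero _ (A * E x + (x - d) * (L * (2 * A * E x)))). intros n.
  replace (Z x - c - RI gZ d x) with ((Z x - Y (S n) x) + (RI (fun t => G t (Y n t) - gZ t) d x)).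
  2:{ simpl. rewrite Rmax_left by lra. rewrite RInt_minus_R by (apply exRInt; intro; first [apply g_cont | apply gZ_cont]). ring. }
  eapply Rle_trans; [apply Rabs_triang|].
  pose proof (Z_bound (S n) x Hx).
  assert (Rabs (RI (fun t => G t (Y n t) - gZ t) d x) <= (x - d) * (L * (2 * A * (/2)^n * E x))).
  { unfold RI. apply abs_RInt_le_const; auto. apply exRInt. intro; apply cont_minus; [apply g_cont| apply gZ_cont].
    intros t Ht. unfold gZ. eapply Rle_trans; [apply Hlip|]. apply Rmult_le_compat_l; auto.
    rewrite <- Rabs_Ropp. replace (- (Y n t - Z t)) with (Z t - Y n t) by ring.
    eapply Rle_trans; [apply Z_bound; lra|].
    pose proof A_pos; pose proof (half_pow_pos n). apply Rmult_le_compat_l; [nra|]. apply E_le; lra. }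
  simpl pow in H.
  replace ((A * E x + (x - d) * (L * (2 * A * E x))) * (/2)^n) with
    (2 * A * (/2 * (/2)^n) * E x + (x - d) * (L * (2 * A * (/2)^n * E x))) by field.
  lra.
Qed.

Lemma Z_ge x : d <= x -> c <= Z x.
Proof.
  intros Hx. rewrite Z_eq by auto. unfold RI.
  assert (0 <= RInt gZ d x). { apply RInt_ge_0; auto. apply exRInt, gZ_cont. intros; apply Hpos. }
  lra.
Qed.

Lemma RI_deriv b : is_derive (fun y => RI gZ d y) b (gZ b).
Proof.
  apply (is_derive_RInt gZ (fun y => RI gZ d y) d b).
  - exists (mkposreal 1 Rlt_0_1). intros y _. unfold RI. apply (RInt_correct (V:=R_CompleteNormedModule)). apply exRInt, gZ_cont.
  - apply gZ_cont.
Qed.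

Lemma Z_deriv x : d < x -> is_derive Z x (G x (Z x)).
Proof.
  intros Hx.
  assert (H : is_derive (fun y => c + RI gZ d y) x (0 + gZ x)).
  { apply (der_plus (fun _ => c) (fun y => RI gZ d y)). apply der_const. apply RI_deriv. }
  rewrite Rplus_0_l in H. unfold gZ in H.
  apply (is_derive_ext_loc (fun y => c + RI gZ d y)); auto.
  assert (He : 0 < x - d) by lra.
  exists (mkposreal _ He). intros y Hy. simpl in Hy. unfold ball in Hy; simpl in Hy.
  unfold AbsRing_ball, abs, minus, plus, opp in Hy; simpl in Hy.
  rewrite Z_eq; auto. apply Rabs_lt_between' in Hy. lra.
Qed.

Lemma Z_right : forall eps, 0 < eps -> exists eta, 0 < eta /\
  forall h, 0 < h < eta -> Rabs ((Z (d + h) - Z d) / h - G d c) < eps.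
Proof.
  intros eps He. pose proof (RI_deriv d) as H. apply is_derive_Reals in H.
  destruct (H eps He) as [eta Heta]. exists eta. split; [apply cond_pos|].
  intros h Hh. specialize (Heta h ltac:(lra) ltac:(rewrite Rabs_right; lra)).
  rewrite Z_eq by lra. rewrite (Z_left d) by lra.
  unfold gZ in Heta. rewrite (Z_left d) in Heta by lra. rewrite RInt_point_R in Heta.
  replace (c + RI gZ d (d + h) - c) with (RI gZ d (d + h) - 0) by ring. exact Heta.
Qed.

End Picard.


Lemma exp_le x y : x <= y -> exp x <= exp y.
Proof. intros [H|H]; [left; apply exp_increasing; auto| subst; lra]. Qed.

Definition Fr (a b k s phi u : R) := (a * u + s / u) / (b * phi + k * u).

Lemma Fr_pos a b k s phi u : 0 < a -> 0 < b -> 0 < k -> 0 < s -> 0 < phi -> 0 < u ->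
  0 < Fr a b k s phi u.
Proof.
  intros. unfold Fr. apply Rdiv_lt_0_compat; [|nra].
  assert (0 < s / u) by (apply Rdiv_lt_0_compat; auto). nra.
Qed.

Lemma Fr_bound a b k s phi u c : 0 < a -> 0 < b -> 0 < k -> 0 < s -> 0 < phi -> 0 < c -> c <= u ->
  Fr a b k s phi u <= a / k + s / (k * c^2).
Proof.
  intros. unfold Fr.
  assert (HN : 0 < a * u + s / u) by (assert (0 < s / u) by (apply Rdiv_lt_0_compat; lra); nra).
  apply Rle_trans with ((a * u + s / u) / (k * u)).
  { apply Rmult_le_compat_l; [lra|]. apply Rinv_le_contravar; nra. }
  replace ((a * u + s / u) / (k * u)) with (a / k + s / (k * u^2)) by (field; lra).
  apply Rplus_le_compat_l. unfold Rdiv. apply Rmult_le_compat_l; [lra|].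
  apply Rinv_le_contravar; [apply Rmult_lt_0_compat; [lra| apply pow_lt; lra]|]. apply Rmult_le_compat_l; [lra|]. apply pow_incr; lra.
Qed.

Lemma Fr_lip a b k s phi u1 u2 c dl : 0 < a -> 0 < b -> 0 < k -> 0 < s -> 0 < dl -> dl <= phi ->
  s <= 1 + phi -> 0 < c -> c <= u1 -> c <= u2 ->
  Rabs (Fr a b k s phi u1 - Fr a b k s phi u2) <=
  (a / b * / dl + (/ dl + 1) / (b * c^2) + 2 * k * (/dl^2 + /dl) / (c * b^2)) * Rabs (u1 - u2).
Proof.
  intros Ha Hb Hk Hs Hdl Hphi Hs1 Hc H1 H2. unfold Fr.
  set (D1 := b * phi + k * u1). set (D2 := b * phi + k * u2).
  assert (HD1 : b * phi <= D1) by (unfold D1; nra). assert (HD2 : b * phi <= D2) by (unfold D2; nra).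
  assert (Hbp : 0 < b * phi) by nra.
  set (Q := a * b * phi - b * phi * s / (u1 * u2) - k * s * (u1 + u2) / (u1 * u2)).
  replace ((a * u1 + s / u1) / D1 - (a * u2 + s / u2) / D2) with ((u1 - u2) * (Q / (D1 * D2))).
  2:{ unfold Q, D1, D2. field. repeat split; nra. }
  rewrite Rabs_mult, Rmult_comm. apply Rmult_le_compat_r; [apply Rabs_pos|].
  rewrite Rabs_div by nra. rewrite (Rabs_right (D1 * D2)) by nra.
  assert (Hbps : 0 < b * phi * s) by (apply Rmult_lt_0_compat; lra).
  assert (Hu12 : 0 < u1 * u2) by (apply Rmult_lt_0_compat; lra).
  assert (Hks : 0 < k * s * (u1 + u2)) by (apply Rmult_lt_0_compat; [apply Rmult_lt_0_compat|]; lra).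
  assert (HQ : Rabs Q <= a * b * phi + b * phi * s / c^2 + 2 * k * s / c).
  { unfold Q. unfold Rminus. eapply Rle_trans; [apply Rabs_triang|].
    eapply Rle_trans; [apply Rplus_le_compat_r; apply Rabs_triang|].
    rewrite !Rabs_Ropp.
    rewrite (Rabs_right (a * b * phi)) by nra.
    rewrite (Rabs_right (b * phi * s / (u1 * u2))) by (apply Rle_ge, Rdiv_le_0_compat; lra).
    rewrite (Rabs_right (k * s * (u1 + u2) / (u1 * u2))) by (apply Rle_ge, Rdiv_le_0_compat; lra).
    apply Rplus_le_compat; [apply Rplus_le_compat_l|].
    - unfold Rdiv. apply Rmult_le_compat_l; [nra|]. apply Rinv_le_contravar; nra.
    - replace (k * s * (u1 + u2) / (u1 * u2)) with (k * s * (/ u1 + / u2)) by (field; lra).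
      replace (2 * k * s / c) with (k * s * (/ c + / c)) by (field; lra).
      apply Rmult_le_compat_l; [nra|]. apply Rplus_le_compat; apply Rinv_le_contravar; lra. }
  apply Rle_trans with (Rabs Q / (b * phi)^2).
  { unfold Rdiv. apply Rmult_le_compat_l; [apply Rabs_pos|]. apply Rinv_le_contravar; nra. }
  apply Rle_trans with ((a * b * phi + b * phi * s / c^2 + 2 * k * s / c) / (b * phi)^2).
  { unfold Rdiv. apply Rmult_le_compat_r; [|auto]. left; apply Rinv_0_lt_compat; nra. }
  set (w := / phi).
  assert (Hw : 0 < w) by (apply Rinv_0_lt_compat; lra).
  assert (Hwd : w <= / dl) by (apply Rinv_le_contravar; lra).
  assert (Hsw : s * w <= w + 1).
  { assert (phi * w = 1) by (unfold w; field; lra).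
    assert (s * w <= (1 + phi) * w) by (apply Rmult_le_compat_r; lra). nra. }
  replace ((a * b * phi + b * phi * s / c^2 + 2 * k * s / c) / (b * phi)^2)
    with (a / b * w + (s * w) / (b * c^2) + 2 * k * ((s * w) * w) / (c * b^2))
    by (unfold w; field; repeat split; lra).
  assert (Hsww : (s * w) * w <= /dl^2 + /dl).
  { apply Rle_trans with ((w + 1) * w). apply Rmult_le_compat_r; lra.
    assert (w * w <= /dl * /dl) by (apply Rmult_le_compat; lra).
    replace (/dl^2) with (/dl * /dl) by (field; lra). nra. }
  apply Rplus_le_compat; [apply Rplus_le_compat|].
  - apply Rmult_le_compat_l; auto. left; apply Rdiv_lt_0_compat; lra.
  - unfold Rdiv. apply Rmult_le_compat_r; [left; apply Rinv_0_lt_compat; apply Rmult_lt_0_compat; [lra| apply pow_lt; lra]| lra].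
  - unfold Rdiv. apply Rmult_le_compat_r; [left; apply Rinv_0_lt_compat; apply Rmult_lt_0_compat; [lra| apply pow_lt; lra]|].
    apply Rmult_le_compat_l; lra.
Qed.


Section Spec.
Variables (p beta : R).
Hypotheses (Hp : 0 < p < 1/2) (Hbeta : beta < 0).

Lemma alpha_gt1 : 1 < alpha p.
Proof. unfold alpha. apply Rmult_lt_reg_r with (2 - p); [lra|].
  unfold Rdiv. rewrite Rmult_assoc, Rinv_l by lra. lra. Qed.

Definition aa := alpha p ^ 2.
Definition bb := alpha p * (alpha p - 1).
Definition kk := - beta.

Lemma aa_pos : 0 < aa. Proof. unfold aa. pose proof alpha_gt1. nra. Qed.
Lemma bb_pos : 0 < bb. Proof. unfold bb. pose proof alpha_gt1. nra. Qed.
Lemma kk_pos : 0 < kk. Proof. unfold kk. lra. Qed.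

Lemma rpow_eq x y : 0 < x -> rpow x y = exp (y * ln x).
Proof. intros. unfold rpow. destruct (Rlt_dec 0 x); [reflexivity| lra]. Qed.

Lemma rpow_pos x y : 0 < x -> 0 < rpow x y.
Proof. intros. rewrite rpow_eq by auto. apply exp_pos. Qed.

Lemma rpow_le x : 0 < x -> rpow x p <= 1 + x.
Proof.
  intros. rewrite rpow_eq by auto. destruct (Rle_dec (ln x) 0).
  - apply Rle_trans with (exp 0); [apply exp_le; nra| rewrite exp_0; lra].
  - apply Rle_trans with (exp (ln x)); [apply exp_le; nra| rewrite exp_ln; lra].
Qed.

Lemma ode_Fr x z : ode_rhs p beta x z = Fr aa bb kk (rpow x p) x z.
Proof. unfold ode_rhs, Fr, aa, bb, kk. f_equal. ring. Qed.

Lemma ode_pos x z : 0 < x -> 0 < z -> 0 < ode_rhs p beta x z.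
Proof. intros. rewrite ode_Fr. apply Fr_pos; auto using aa_pos, bb_pos, kk_pos, rpow_pos. Qed.

Lemma ode_den_pos x z : 0 < x -> 0 < z -> 0 < alpha p * (alpha p - 1) * x - beta * z.
Proof. intros. pose proof bb_pos. unfold bb in H1. nra. Qed.

Section G.
Variables (c dl : R).
Hypotheses (Hc : 0 < c) (Hdl : 0 < dl).

Definition Gs t z := ode_rhs p beta (Rmax t dl) (Rmax z c).

Lemma Rmax_pos1 t : 0 < Rmax t dl. Proof. eapply Rlt_le_trans; [exact Hdl| apply Rmax_r]. Qed.
Lemma Rmax_pos2 z : 0 < Rmax z c. Proof. eapply Rlt_le_trans; [exact Hc| apply Rmax_r]. Qed.

Lemma Gs_pos t z : 0 <= Gs t z.
Proof. left. apply ode_pos; [apply Rmax_pos1| apply Rmax_pos2]. Qed.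

Definition B1 := / (kk * c^2).
Definition B0 := aa / kk + B1.

Lemma B1_pos : 0 <= B1.
Proof. unfold B1. left. apply Rinv_0_lt_compat, Rmult_lt_0_compat; [apply kk_pos| apply pow_lt; lra]. Qed.
Lemma B0_pos : 0 <= B0.
Proof. unfold B0. pose proof B1_pos. pose proof aa_pos. pose proof kk_pos.
  assert (0 < aa / kk) by (apply Rdiv_lt_0_compat; lra). lra. Qed.

Lemma Gs_bnd t z : Rabs (Gs t z) <= B0 + B1 * Rmax t dl.
Proof.
  rewrite Rabs_right by (apply Rle_ge, Gs_pos). unfold Gs. rewrite ode_Fr.
  pose proof (Rmax_pos1 t). pose proof (Rmax_pos2 z).
  eapply Rle_trans. apply (Fr_bound _ _ _ _ _ _ c); auto using aa_pos, bb_pos, kk_pos, rpow_pos. apply Rmax_r.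
  unfold B0. rewrite Rplus_assoc. apply Rplus_le_compat_l.
  replace (B1 + B1 * Rmax t dl) with ((1 + Rmax t dl) * B1) by ring.
  unfold B1, Rdiv. apply Rmult_le_compat_r; [apply B1_pos| apply rpow_le; auto].
Qed.

Definition Lg := aa / bb * / dl + (/ dl + 1) / (bb * c^2) + 2 * kk * (/dl^2 + /dl) / (c * bb^2).

Lemma Lg_pos : 0 <= Lg.
Proof.
  pose proof aa_pos; pose proof bb_pos; pose proof kk_pos.
  pose proof (Rinv_0_lt_compat dl Hdl).
  assert (0 < /dl^2) by (apply Rinv_0_lt_compat, pow_lt; lra).
  unfold Lg. repeat apply Rplus_le_le_0_compat; left.
  - apply Rmult_lt_0_compat; auto. apply Rdiv_lt_0_compat; auto.
  - apply Rdiv_lt_0_compat; [lra| apply Rmult_lt_0_compat; [lra| apply pow_lt; lra]].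
  - apply Rdiv_lt_0_compat; [nra| apply Rmult_lt_0_compat; [lra| apply pow_lt; lra]].
Qed.

Lemma Gs_lip t z1 z2 : Rabs (Gs t z1 - Gs t z2) <= Lg * Rabs (z1 - z2).
Proof.
  unfold Gs. rewrite !ode_Fr.
  pose proof (Rmax_pos1 t).
  eapply Rle_trans. apply (Fr_lip _ _ _ _ _ _ _ c dl); auto using aa_pos, bb_pos, kk_pos, rpow_pos, Rmax_r.
  apply rpow_le; auto.
  fold Lg. apply Rmult_le_compat_l. apply Lg_pos. apply Rmax_lip.
Qed.

Lemma Gs_cont (Y : R -> R) : (forall x, continuous Y x) -> forall t, continuous (fun t => Gs t (Y t)) t.
Proof.
  intros HY t. unfold Gs, ode_rhs.
  pose proof (Rmax_pos1 t). pose proof (Rmax_pos2 (Y t)).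
  assert (Hm1 : continuous (fun t => Rmax t dl) t) by (apply (cont_Rmax (fun y => y)); apply cont_id).
  assert (Hm2 : continuous (fun t => Rmax (Y t) c) t) by (apply cont_Rmax; auto).
  assert (Hr : continuous (fun t => rpow (Rmax t dl) p) t).
  { apply (continuous_ext (fun t => exp (p * ln (Rmax t dl)))).
    { intros; rewrite rpow_eq; auto. apply Rmax_pos1. }
    apply (continuous_comp (fun t => Rmax t dl) (fun y => exp (p * ln y))); auto.
    apply cont_der. auto_derive. auto. }
  apply cont_div.
  - apply cont_plus. apply cont_mul; auto. apply cont_const.
    apply cont_div; auto. lra.
  - apply cont_minus; apply cont_mul; auto; apply cont_const.
  - pose proof (ode_den_pos (Rmax t dl) (Rmax (Y t) c)). lra.
Qed.

End G.
End Spec.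


Lemma Rmin_lip x y c : Rabs (Rmin x c - Rmin y c) <= Rabs (x - y).
Proof. unfold Rmin; destruct (Rle_dec x c), (Rle_dec y c); split_Rabs; lra. Qed.

Lemma cont_Rmin (f : R -> R) c x : continuous f x -> continuous (fun y => Rmin (f y) c) x.
Proof.
  intros Hf. apply (continuous_comp f (fun z => Rmin z c)); auto.
  apply cont_eps. intros eps He. exists eps; split; auto. intros y Hy.
  eapply Rle_lt_trans; [apply Rmin_lip|]. exact Hy.
Qed.

Lemma no_sign_change (f : R -> R) lo hi : lo <= hi ->
  (forall x, lo <= x <= hi -> continuous f x) ->
  (forall x, lo <= x <= hi -> f x <> 0) ->
  0 < f lo -> 0 < f hi.
Proof.
  intros Hlh Hc Hnz Hlo.
  destruct (Rlt_dec 0 (f hi)) as [|Hhi]; auto. exfalso.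
  set (g := fun y => f (Rmax (Rmin y hi) lo)).
  assert (Hcl : forall y, lo <= Rmax (Rmin y hi) lo <= hi).
  { intro y. split; [apply Rmax_r|]. apply Rmax_lub; auto. apply Rmin_r. }
  assert (Hg : continuity g).
  { intro y. apply continuity_pt_filterlim. unfold g.
    apply (continuous_comp (fun y => Rmax (Rmin y hi) lo) f).
    - apply (cont_Rmax (fun y => Rmin y hi)). apply (cont_Rmin (fun y => y)). apply cont_id.
    - apply Hc. apply Hcl. }
  assert (Hglo : g lo = f lo) by (unfold g; f_equal; unfold Rmax, Rmin; destruct (Rle_dec lo hi), (Rle_dec lo lo); lra).
  assert (Hghi : g hi = f hi) by (unfold g; f_equal; unfold Rmax, Rmin; destruct (Rle_dec hi hi), (Rle_dec hi lo); lra).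
  destruct (IVT_gen g lo hi 0 Hg) as [x [Hx Hgx]].
  { rewrite Hglo, Hghi. unfold Rmin, Rmax. destruct (Rle_dec (f lo) (f hi)); lra. }
  unfold g in Hgx. apply (Hnz _ (Hcl x)). exact Hgx.
Qed.

Lemma no_sign_change2 (f : R -> R) a b lo hi : lo <= a <= hi -> lo <= b <= hi ->
  (forall x, lo <= x <= hi -> continuous f x) ->
  (forall x, lo <= x <= hi -> f x <> 0) ->
  0 < f a -> 0 < f b.
Proof.
  intros Ha Hb Hc Hnz Hfa.
  destruct (Rle_dec a b).
  - apply (no_sign_change f a b); auto; intros; [apply Hc| apply Hnz]; lra.
  - destruct (Rlt_dec 0 (f b)) as [|Hfb]; auto. exfalso.
    assert (Hfb' : 0 < - f b) by (assert (f b <> 0) by (apply Hnz; lra); lra).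
    assert (0 < - f a).
    { apply (no_sign_change (fun x => - f x) b a); auto; try lra.
      - intros x Hx. apply (continuous_opp f). apply Hc; lra.
      - intros x Hx. assert (f x <> 0) by (apply Hnz; lra). lra. }
    lra.
Qed.

Section Main.
Variables (p beta q delta : R) (zeta : R -> R).
Hypotheses (Hp : 0 < p < 1/2) (Hb : beta < 0) (Hq : (p + 1) / 3 < q < 1) (Hd : 0 < delta)
  (Hcz : forall x, 0 <= x <= delta ->
     filterlim zeta (within (fun y => 0 <= y <= delta) (locally x)) (locally (zeta x)))
  (Hz0 : zeta 0 = 0)
  (Hasy : forall x, 0 <= x <= delta ->
     Rabs (zeta x - gamma_beta p beta * rpow x ((p + 1) / 3)) <= rpow x q)
  (Hdef : forall x, 0 < x <= delta -> ode_defined p beta x (zeta x))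
  (Hder : forall x, 0 < x < delta -> is_derive zeta x (ode_rhs p beta x (zeta x))).

Lemma gamma_pos : 0 < gamma_beta p beta.
Proof.
  unfold gamma_beta. apply rpow_pos. apply Rdiv_lt_0_compat; [lra|].
  rewrite Rabs_left by lra. nra.
Qed.

Lemma exists_pos : exists x0, 0 < x0 < delta /\ 0 < zeta x0.
Proof.
  set (g := gamma_beta p beta). pose proof gamma_pos as Hg. fold g in Hg.
  set (r := (p + 1) / 3). set (e := q - r).
  assert (He : 0 < e) by (unfold e, r; lra).
  set (m := Rmin (ln (delta / 2)) (ln g / e - 1)).
  exists (exp m).
  assert (Hx0 : exp m <= delta / 2).
  { rewrite <- (exp_ln (delta/2)) by lra. apply exp_le. apply Rmin_l. }
  pose proof (exp_pos m).
  split; [lra|].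
  specialize (Hasy (exp m) ltac:(lra)). fold g r in Hasy.
  rewrite !rpow_eq, !ln_exp in Hasy by auto.
  assert (Hq' : q * m = r * m + e * m) by (unfold e; ring).
  rewrite Hq', exp_plus in Hasy.
  assert (Hem : exp (e * m) < g).
  { rewrite <- (exp_ln g) by auto. apply exp_increasing.
    assert (e * m <= e * (ln g / e - 1)) by (apply Rmult_le_compat_l; [lra| apply Rmin_r]).
    replace (e * (ln g / e - 1)) with (ln g - e) in H0 by (field; lra). lra. }
  pose proof (exp_pos (r * m)).
  assert (exp (r * m) * exp (e * m) < g * exp (r * m)) by nra.
  apply Rabs_le_between' in Hasy. lra.
Qed.

Lemma zeta_cont x : 0 < x < delta -> continuous zeta x.
Proof. intros. apply cont_der. eexists. apply Hder; auto. Qed.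

Lemma zeta_pos_int x : 0 < x < delta -> 0 < zeta x.
Proof.
  intros Hx. destruct exists_pos as [x0 [Hx0 Hz]].
  apply (no_sign_change2 zeta x0 x (Rmin x0 x) (Rmax x0 x)).
  - split; [apply Rmin_l| apply Rmax_l].
  - split; [apply Rmin_r| apply Rmax_r].
  - intros y Hy. apply zeta_cont. split.
    + eapply Rlt_le_trans; [|apply Hy]. apply Rmin_glb_lt; lra.
    + eapply Rle_lt_trans; [apply Hy|]. apply Rmax_lub_lt; lra.
  - intros y Hy. apply Hdef. split.
    + eapply Rlt_le_trans; [|apply Hy]. apply Rmin_glb_lt; lra.
    + eapply Rle_trans; [apply Hy|]. apply Rmax_lub; lra.
  - auto.
Qed.

Lemma zeta_pos x : 0 < x <= delta -> 0 < zeta x.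
Proof.
  intros Hx. destruct (Rlt_dec x delta) as [Hlt|Hge]; [apply zeta_pos_int; lra|].
  assert (x = delta) by lra. subst x.
  destruct (Rlt_dec 0 (zeta delta)) as [|Hn]; auto. exfalso.
  assert (Hne : zeta delta <> 0) by (apply (Hdef delta); lra).
  assert (Hneg : 0 < - zeta delta) by lra.
  specialize (Hcz delta ltac:(lra)). pose proof (proj1 (filterlim_locally (F := within (fun y => 0 <= y <= delta) (locally delta)) (U := R_UniformSpace) zeta (zeta delta)) Hcz) as Hcz2. clear Hcz. rename Hcz2 into Hcz.
  destruct (Hcz (mkposreal _ Hneg)) as [eta Heta].
  set (y := Rmax (delta/2) (delta - eta/2)).
  assert (Hy1 : delta / 2 <= y) by apply Rmax_l.
  assert (Hy2 : delta - eta/2 <= y) by apply Rmax_r.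
  pose proof (cond_pos eta).
  assert (Hy3 : y < delta) by (apply Rmax_lub_lt; lra).
  specialize (Heta y). simpl in Heta.
  assert (Hb1 : ball delta eta y).
  { change (Rabs (y - delta) < eta). rewrite Rabs_left by lra. lra. }
  specialize (Heta Hb1 ltac:(lra)).
  change (Rabs (zeta y - zeta delta) < - zeta delta) in Heta.
  pose proof (zeta_pos_int y ltac:(lra)).
  apply Rabs_lt_between' in Heta. lra.
Qed.


Lemma Rmax_self x : Rmax x x = x.
Proof. unfold Rmax; destruct (Rle_dec x x); lra. Qed.

Lemma main_aux
  (Hleft : filterlim (fun h => (zeta (delta + h) - zeta delta) / h) (at_left 0)
    (locally (ode_rhs p beta delta (zeta delta)))) :
  exists W : R -> R,
    (forall x, 0 <= x <= delta -> W x = zeta x) /\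
    (forall x, 0 < x -> ode_defined p beta x (W x) /\
                        is_derive W x (ode_rhs p beta x (W x))) /\
    (forall x, 0 < x -> 0 < W x) /\
    (forall x y, 0 < x -> x <= y -> W x <= W y).
Proof.
  set (c := zeta delta). assert (Hc : 0 < c) by (apply zeta_pos; lra).
  set (G := Gs p beta c delta).
  pose proof (Lg_pos p beta Hp Hb c delta Hc Hd) as HL.
  pose proof (B0_pos p beta Hp Hb c Hc) as HB0.
  pose proof (B1_pos beta Hb c Hc) as HB1.
  pose proof (Gs_cont p beta Hp Hb c delta Hc Hd) as Hcont.
  pose proof (Gs_lip p beta Hp Hb c delta Hc Hd) as Hlip.
  pose proof (Gs_bnd p beta Hp Hb c delta Hc Hd) as Hbnd.
  pose proof (Gs_pos p beta Hp Hb c delta Hc Hd) as Hpos.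
  fold G in Hcont, Hlip, Hbnd, Hpos.
  set (Zf := Z delta c G).
  pose proof (Z_deriv delta c _ _ _ G Hd HL HB0 HB1 Hcont Hlip Hbnd) as Zd. fold Zf in Zd.
  pose proof (Z_left delta c _ _ _ G Hd HL HB0 HB1 Hcont Hlip Hbnd) as Zl. fold Zf in Zl.
  pose proof (Z_ge delta c _ _ _ G Hd HL HB0 HB1 Hcont Hlip Hbnd Hpos) as Zg. fold Zf in Zg.
  pose proof (Z_right delta c _ _ _ G Hd HL HB0 HB1 Hcont Hlip Hbnd) as Zr. fold Zf in Zr.
  set (W := fun x => if Rle_dec x delta then zeta x else Zf x).
  assert (Wl : forall x, x <= delta -> W x = zeta x).
  { intros x Hx. unfold W. destruct (Rle_dec x delta); [auto| lra]. }
  assert (Wr : forall x, delta < x -> W x = Zf x).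
  { intros x Hx. unfold W. destruct (Rle_dec x delta); [lra| auto]. }
  assert (Wpos : forall x, 0 < x -> 0 < W x).
  { intros x Hx. destruct (Rle_dec x delta).
    - rewrite Wl by auto. apply zeta_pos; lra.
    - rewrite Wr by lra. pose proof (Zg x ltac:(lra)). lra. }
  assert (Wder : forall x, 0 < x -> is_derive W x (ode_rhs p beta x (W x))).
  { intros x Hx. destruct (Rtotal_order x delta) as [Hlt|[Heq|Hgt]].
    - rewrite Wl by lra. apply (is_derive_ext_loc zeta); [| apply Hder; lra].
      assert (He : 0 < delta - x) by lra. exists (mkposreal _ He). intros y Hy.
      change (Rabs (y - x) < delta - x) in Hy. apply Rabs_lt_between' in Hy.
      rewrite Wl; auto; lra.
    - subst x. apply is_derive_Reals. intros eps Heps.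
      pose proof (proj1 (filterlim_locally (F := at_left 0) (U := R_UniformSpace) _ _) Hleft) as HL2.
      destruct (HL2 (mkposreal _ Heps)) as [e1 He1].
      destruct (Zr eps Heps) as [e2 [He2 Hr2]].
      assert (He : 0 < Rmin e1 e2) by (apply Rmin_pos; [apply cond_pos| auto]).
      exists (mkposreal _ He). intros h Hh0 Hh. simpl in Hh.
      assert (Hh1 : Rabs h < e1) by (eapply Rlt_le_trans; [exact Hh| apply Rmin_l]).
      assert (Hh2 : Rabs h < e2) by (eapply Rlt_le_trans; [exact Hh| apply Rmin_r]).
      rewrite (Wl delta) by lra.
      destruct (Rlt_dec h 0) as [Hneg|Hnn].
      + rewrite Wl by lra.
        assert (Hb0 : ball 0 e1 h) by (change (Rabs (h - 0) < e1); rewrite Rminus_0_r; auto).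
        specialize (He1 h Hb0 Hneg). change (Rabs ((zeta (delta + h) - zeta delta) / h - ode_rhs p beta delta (zeta delta)) < eps) in He1.
        exact He1.
      + assert (Hpos' : 0 < h) by lra.
        rewrite Wr by lra.
        rewrite Rabs_right in Hh2 by lra.
        specialize (Hr2 h ltac:(lra)).
        rewrite (Zl delta) in Hr2 by lra. fold c.
        unfold G, Gs in Hr2. rewrite !Rmax_self in Hr2. exact Hr2.
    - rewrite Wr by lra.
      assert (Hgx : ode_rhs p beta x (Zf x) = G x (Zf x)).
      { unfold G, Gs. rewrite Rmax_left by lra. rewrite (Rmax_left (Zf x) c); auto. apply Zg. lra. }
      rewrite Hgx. apply (is_derive_ext_loc Zf); [| apply Zd; lra].
      assert (He : 0 < x - delta) by lra. exists (mkposreal _ He). intros y Hy.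
      change (Rabs (y - x) < x - delta) in Hy. apply Rabs_lt_between' in Hy.
      rewrite Wr; auto; lra. }
  exists W. split; [|split; [|split]].
  - intros x Hx. apply Wl; lra.
  - intros x Hx. split; auto. pose proof (Wpos x Hx). split; [lra|].
    pose proof (ode_den_pos p beta Hp Hb x (W x) Hx H). lra.
  - exact Wpos.
  - intros x y Hx Hxy. destruct (Req_dec x y) as [->|Hne]; [lra|].
    left. apply (incr_function W (Finite 0) p_infty (fun x => ode_rhs p beta x (W x))).
    + intros z Hz _. apply Wder. exact Hz.
    + intros z Hz _. apply ode_pos; auto.
    + simpl. auto.
    + lra.
    + simpl. auto.
Qed.

End Main.

Theorem proposition7p2 (p beta q delta : R) (zeta : R -> R) :
  0 < p < 1/2 -> beta < 0 -> (p + 1) / 3 < q < 1 -> 0 < delta ->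
  (* zeta in C([0, delta]) *)
  (forall x, 0 <= x <= delta ->
     filterlim zeta (within (fun y => 0 <= y <= delta) (locally x)) (locally (zeta x))) ->
  zeta 0 = 0 ->
  (forall x, 0 <= x <= delta ->
     Rabs (zeta x - gamma_beta p beta * rpow x ((p + 1) / 3)) <= rpow x q) ->
  (* ODE on (0, delta]: two-sided derivative on (0,delta), left derivative at delta *)
  (forall x, 0 < x <= delta -> ode_defined p beta x (zeta x)) ->
  (forall x, 0 < x < delta -> is_derive zeta x (ode_rhs p beta x (zeta x))) ->
  filterlim (fun h => (zeta (delta + h) - zeta delta) / h) (at_left 0)
    (locally (ode_rhs p beta delta (zeta delta))) ->
  exists Z : R -> R,
    (forall x, 0 <= x <= delta -> Z x = zeta x) /\
    (forall x, 0 < x -> ode_defined p beta x (Z x) /\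
                        is_derive Z x (ode_rhs p beta x (Z x))) /\
    (forall x, 0 < x -> 0 < Z x) /\
    (forall x y, 0 < x -> x <= y -> Z x <= Z y).
Proof.
  intros Hp Hb Hq Hd Hcz Hz0 Hasy Hdef Hder Hleft.
  eapply main_aux; eassumption.
Qed.
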